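(* Let $\mathcal{F}$ be a $\kappa$-complete filter over $\kappa$ which extends the club filter $\mathcal{D}_\kappa$. If $\mathrm{Gal}(\mathcal{F},\kappa^+,\kappa^{++})$ holds, then $\neg_{\mathrm{st}}\mathrm{Gal}(\mathcal{D}_{\kappa^+},\kappa^+,\kappa^{++})$ fails. In particular, $\mathrm{Gal}(\mathcal{F},\kappa^+,\kappa^+)$ entails the failure of $\neg_{\mathrm{st}}\mathrm{Gal}(\mathcal{D}_{\kappa^+},\kappa^+,\kappa^{++})$.
   Context: $\mathcal{D}_\theta$ is the club filter on $\theta$. $\mathrm{Gal}(\mathcal{F},\mu,\lambda)$: for every $\mathcal{C}\subseteq\mathcal{F}$ with $|\mathcal{C}|=\lambda$ there is $\mathcal{E}\subseteq\mathcal{C}$ with $|\mathcal{E}|=\mu$ and $\bigcap\mathcal{E}\in\mathcal{F}$. $\neg_{\mathrm{st}}\mathrm{Gal}(\mathcal{D}_{\kappa^+},\mu,\lambda)$: there is $\mathcal{C}\subseteq\mathcal{D}_{\kappa^+}$ with $|\mathcal{C}|=\lambda$ such that for every $\mathcal{E}\subseteq\mathcal{C}$ with $|\mathcal{E}|=\mu$, $|\bigcap\mathcal{E}|<\kappa$. *)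

(* Defs.v *)
From mathcomp Require Import all_boot.
From mathcomp Require Import boolp classical_sets functions cardinality.
Set Implicit Arguments. Unset Strict Implicit. Unset Printing Implicit Defensive.
Local Open Scope classical_set_scope.
Local Open Scope card_scope.

(* Ordinals and cardinals are modelled as types equipped with a strict
   well-order; cardinality comparisons use mathcomp-analysis' [card_le]
   (existence of an injection) and [card_eq] (existence of a bijection). *)

Definition card_lt T U (A : set T) (B : set U) : Prop :=
  (A #<= B) /\ ~ (B #<= A).

Definition well_order (T : Type) (lt : T -> T -> Prop) : Prop :=
  [/\ (forall x, ~ lt x x),
      (forall x y z, lt x y -> lt y z -> lt x z),
      (forall x y, [\/ lt x y, x = y | lt y x]) &
      well_founded lt].

Definition below (T : Type) (lt : T -> T -> Prop) (a : T) : set T :=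
  [set x | lt x a].

(* (T, lt) is (the order type of) an infinite regular uncountable cardinal:
   an initial ordinal (every proper initial segment has smaller cardinality),
   uncountable, and every unbounded subset has full cardinality. *)
Definition unbounded (T : Type) (lt : T -> T -> Prop) (A : set T) : Prop :=
  forall x, exists2 y, A y & lt x y.

Definition regular_uncountable_cardinal (T : Type) (lt : T -> T -> Prop) : Prop :=
  [/\ well_order lt,
      (forall a : T, card_lt (below lt a) [set: T]),
      ~ ([set: T] #<= [set: nat]) &
      (forall A : set T, unbounded lt A -> [set: T] #<= A)].

(* (U, ltU) is (the order type of) the cardinal successor of |T|:
   every proper initial segment has cardinality <= |T|, the whole has > |T|. *)
Definition successor_cardinal (T U : Type) (ltU : U -> U -> Prop) : Prop :=
  [/\ well_order ltU,
      (forall a : U, below ltU a #<= [set: T]) &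
      card_lt [set: T] [set: U]].

Definition closed_set (T : Type) (lt : T -> T -> Prop) (C : set T) : Prop :=
  forall a, (exists b, lt b a) ->
    (forall b, lt b a -> exists c, [/\ C c, lt b c & lt c a]) -> C a.

Definition club (T : Type) (lt : T -> T -> Prop) (C : set T) : Prop :=
  closed_set lt C /\ unbounded lt C.

Definition club_filter (T : Type) (lt : T -> T -> Prop) : set (set T) :=
  [set A | exists2 C, club lt C & C `<=` A].

Definition is_filter (T : Type) (F : set (set T)) : Prop :=
  [/\ F [set: T], ~ F set0,
      (forall A B, F A -> A `<=` B -> F B) &
      (forall A B, F A -> F B -> F (A `&` B))].

Definition complete_filter (K T : Type) (F : set (set T)) : Prop :=
  forall (I : Type) (f : I -> set T), card_lt [set: I] [set: K] ->
    (forall i, F (f i)) -> F (\bigcap_(i : I) f i).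

(* Gal(F, mu, lambda), with mu = |M| and lambda = |L| *)
Definition Gal (T M L : Type) (F : set (set T)) : Prop :=
  forall C : set (set T), C `<=` F -> C #= [set: L] ->
    exists E : set (set T),
      [/\ E `<=` C, E #= [set: M] & F (\bigcap_(A in E) A)].

(* neg_st Gal(D_{kappa^+}, mu, lambda): D is the club filter on kappa^+
   (type Kp), kappa = |K|, mu = |M|, lambda = |L| *)
Definition neg_st_Gal (K Kp M L : Type) (ltKp : Kp -> Kp -> Prop) : Prop :=
  exists C : set (set Kp),
    [/\ C `<=` club_filter ltKp, C #= [set: L] &
        forall E : set (set Kp), E `<=` C -> E #= [set: M] ->
          card_lt (\bigcap_(A in E) A) [set: K]].

(* Main.v *)
Require Import Defs.
From mathcomp Require Import all_boot.
From mathcomp Require Import boolp classical_sets functions cardinality.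
From Stdlib Require Import ClassicalEpsilon.
Set Implicit Arguments. Unset Strict Implicit. Unset Printing Implicit Defensive.
Local Open Scope classical_set_scope.
Local Open Scope card_scope.


Definition injs T U (A : set T) (B : set U) :=
  exists f : T -> U, (forall x, A x -> B (f x)) /\
    (forall x y, A x -> A y -> f x = f y -> x = y).

Lemma inj_le T U (A : set T) (B : set U) : injs A B -> A #<= B.
Proof.
move=> [f [fAB finj]].
have : $|{injfun A >-> B}|.
  apply/injfunPex; exists f; first exact: fAB.
  by move=> x y /set_mem Ax /set_mem Ay; apply: finj.
by case=> F; exact: inj_card_le F.
Qed.

Lemma le_inj T U (A : set T) (B : set U) : A #<= B -> (exists a, A a) -> injs A B.
Proof.
move=> /card_leP [g] [a0 Aa0].
have dflt : U := val (g (exist _ a0 (mem_set Aa0))).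
pose f x := match pselect (A x) with
  | left Ax => val (g (exist _ x (mem_set Ax)))
  | right _ => dflt end.
exists f; split.
  move=> x Ax; rewrite /f; case: pselect => // Ax'.
  exact: set_mem (valP (g _)).
move=> x y Ax Ay; rewrite /f; case: pselect => // Ax'; case: pselect => // Ay'.
move=> /val_inj H.
have := functions.inj (f:=g) (in_setT _) (in_setT _) H.
by move=> /(congr1 val).
Qed.

Lemma set0_le T U (A : set T) (B : set U) : ~ (exists a, A a) -> A #<= B.
Proof.
move=> nA; have -> : A = set0.
  by apply/seteqP; split => x // Ax; apply: nA; exists x.
exact: card_ge0.
Qed.

Lemma le_injs_or T U (A : set T) (B : set U) x : A #<= B -> A x -> injs A B.
Proof. by move=> AB Ax; apply: le_inj => //; exists x. Qed.

Lemma setX_le T T' U U' (A : set T) (A' : set T') (B : set U) (B' : set U') :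
  A #<= A' -> B #<= B' -> A `*` B #<= A' `*` B'.
Proof.
move=> hA hB.
case: (pselect (exists a, A a)) => [[a Aa]|nA]; last first.
  by apply: set0_le => -[[x y] [/= Ax _]]; apply: nA; exists x.
case: (pselect (exists b, B b)) => [[b Bb]|nB]; last first.
  by apply: set0_le => -[[x y] [/= _ By]]; apply: nB; exists y.
have [f [fA finj]] := le_injs_or hA Aa.
have [g [gB ginj]] := le_injs_or hB Bb.
apply: inj_le; exists (fun p => (f p.1, g p.2)); split.
  by move=> [x y] [/= Ax By]; split => /=; [apply: fA | apply: gB].
move=> [x y] [x' y'] [/= Ax By] [/= Ax' By'] [] /finj-/(_ Ax Ax') ->.
by move/ginj => /(_ By By') ->.
Qed.

Lemma union_le T J V (X : set T) (I : set J) (S : J -> set T) (Z : set V) :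
  (forall x, X x -> exists2 i, I i & S i x) ->
  (forall i, I i -> S i #<= Z) -> X #<= I `*` Z.
Proof.
move=> cov hS.
case: (pselect (exists a, X a)) => [[a Xa]|nX]; last exact: set0_le.
have [i0 Ii0 Si0a] := cov a Xa.
have [z0 _] : exists z : V, True.
  have [f [fS _]] := le_injs_or (hS _ Ii0) Si0a.
  by exists (f a).
pose idx x := epsilon (inhabits i0) (fun i => I i /\ S i x).
have idxP : forall x, X x -> I (idx x) /\ S (idx x) x.
  move=> x Xx; apply: (epsilon_spec (inhabits i0) (fun i => I i /\ S i x)).
  by have [i Ii Six] := cov x Xx; exists i.
pose fi i := epsilon (inhabits (fun _ : T => z0))
  (fun f => (forall x, S i x -> Z (f x)) /\
    (forall x y, S i x -> S i y -> f x = f y -> x = y)).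
have fiP : forall i x, I i -> S i x -> (forall x, S i x -> Z (fi i x)) /\
    (forall x y, S i x -> S i y -> fi i x = fi i y -> x = y).
  move=> i x Ii Six; apply: (epsilon_spec (inhabits (fun _ : T => z0)) (fun f => (forall x, S i x -> Z (f x)) /\
    (forall x y, S i x -> S i y -> f x = f y -> x = y))).
  exact: le_injs_or (hS _ Ii) Six.
apply: inj_le; exists (fun x => (idx x, fi (idx x) x)); split.
  move=> x Xx; have [Ii Six] := idxP x Xx; split => //=.
  by have [+ _] := fiP _ _ Ii Six; apply.
move=> x y Xx Xy [] eij.
have [Ii Six] := idxP x Xx; have [Ij Sjy] := idxP y Xy.
rewrite -eij in Sjy *.
by have [_ +] := fiP _ _ Ii Six; apply.
Qed.

Lemma wf_compare (X U : Type) (R : X -> X -> Prop) (Rwf : well_founded R)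
  (P : set X) (Y : set U) :
  (forall p q, P p -> P q -> [\/ R p q, p = q | R q p]) ->
  (forall p, P p -> ~ (Y #<= [set q | P q /\ R q p])) -> P #<= Y.
Proof.
move=> Rtot H.
case: (pselect (exists a, P a)) => [[p0 Pp0]|nP]; last exact: set0_le.
have [y0 Yy0] : exists y, Y y.
  apply: contrapT => nY; apply: (H p0 Pp0); exact: set0_le.
pose F (x : X) (rec : forall y, R y x -> U) : U :=
  epsilon (inhabits y0)
    (fun u => Y u /\ ~ exists q (h : R q x), P q /\ rec q h = u).
pose f := Fix Rwf (fun _ => U) F.
have fE : forall x, f x = F x (fun y _ => f y).
  apply: Fix_eq => x g1 g2 e; rewrite /F; congr epsilon.
  apply: funext => u; apply: propext; split=> -[Yu nq]; split=> // -[q [h [Pq e']]];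
    apply: nq; exists q, h; split => //; by rewrite ?e ?(esym (e _ _)) in e' *.
have fP : forall p, P p -> Y (f p) /\ ~ exists q, [/\ R q p, P q & f q = f p].
  move=> p Pp.
  have ex : exists u, Y u /\ ~ exists q (h : R q p), P q /\ f q = u.
    apply: contrapT => nE; apply: (H p Pp).
    apply: inj_le.
    exists (fun u => epsilon (inhabits p) (fun q => [/\ R q p, P q & f q = u])).
    have gP : forall u, Y u -> [/\ R (epsilon (inhabits p) (fun q => [/\ R q p, P q & f q = u])) p,
         P (epsilon (inhabits p) (fun q => [/\ R q p, P q & f q = u])) &
         f (epsilon (inhabits p) (fun q => [/\ R q p, P q & f q = u])) = u].
      move=> u Yu; apply: (epsilon_spec (inhabits p) (fun q => [/\ R q p, P q & f q = u])).
      apply: contrapT => nq; apply: nE; exists u; split => // -[q [h [Pq fq]]].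
      by apply: nq; exists q.
    split.
      by move=> u Yu; have [? ? _] := gP u Yu.
    move=> u v Yu Yv e.
    have [_ _ <-] := gP u Yu; have [_ _ <-] := gP v Yv.
    by rewrite e.
  have := epsilon_spec (inhabits y0)
    (fun u => Y u /\ ~ exists q (h : R q p), P q /\ f q = u) ex.
  rewrite -/(F p (fun y _ => f y)) -fE => -[Yf nq]; split => // -[q [Rq Pq e]]; apply: nq.
  by exists q, Rq; split.
apply: inj_le; exists f; split; first by move=> p Pp; have [] := fP p Pp.
move=> p q Pp Pq e.
have [Rpq|//|Rqp] := Rtot p q Pp Pq.
  by have [_ []] := fP q Pq; exists p; split.
by have [_ []] := fP p Pp; exists q; split.
Qed.

Lemma inf_plus1 T (A : set T) (m : T) : [set: nat] #<= A -> A `|` [set m] #<= A.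
Proof.
move=> hN.
case: (pselect (A m)) => Am.
  by apply: subset_card_le => x [//|->].
have [g [gA ginj]] := le_injs_or hN (I : [set: nat] 0%N).
have ginj' : forall n k, g n = g k -> n = k by move=> n k; apply: ginj.
pose f x := match pselect (x = m) with
  | left _ => g 0%N
  | right _ => match pselect (exists n, g n = x) with
     | left h => g (projT1 (cid h)).+1
     | right _ => x end end.
have fm : f m = g 0%N by rewrite /f; case: pselect.
have fg : forall n, f (g n) = g n.+1.
  move=> n; rewrite /f; case: pselect => [e|_]; first by case: Am; rewrite -e; apply: gA.
  case: pselect => [h|[]]; last by exists n.
  by case: (cid h) => k /= /ginj' ->.
have fo : forall x, x <> m -> ~ (exists n, g n = x) -> f x = x.
  by move=> x xm nx; rewrite /f; case: pselect => // _; case: pselect.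
apply: inj_le; exists f; split.
  move=> x [Ax|->]; last by rewrite fm; apply: gA.
  have xm : x <> m by move=> e; apply: Am; rewrite -e.
  case: (pselect (exists n, g n = x)) => [[n <-]|nx]; first by rewrite fg; apply: gA.
  by rewrite fo.
have key : forall x, (A `|` [set m]) x ->
   [\/ x = m /\ f x = g 0%N, exists n, x = g n /\ f x = g n.+1 | (~ exists n, g n = x) /\ f x = x /\ A x].
  move=> x [Ax|->]; last by apply: Or31.
  have xm : x <> m by move=> e; apply: Am; rewrite -e.
  case: (pselect (exists n, g n = x)) => [[n <-]|nx]; first by apply: Or32; exists n; rewrite fg.
  by apply: Or33; rewrite fo.
move=> x y Hx Hy.
case: (key x Hx) => [[-> ->]|[n [-> ->]]|[nx [-> Ax]]];
case: (key y Hy) => [[-> ->]|[k [-> ->]]|[ny [-> Ay]]] //.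
- by move/ginj'.
- by move=> e; case: ny; exists 0%N.
- by move/ginj'.
- by move/ginj' => [->].
- by move=> e; case: ny; exists n.+1.
- by move=> e; case: nx; exists 0%N.
- by move=> e; case: nx; exists k.+1.
Qed.


Section WO.
Variables (W : Type) (lt : W -> W -> Prop) (hw : well_order lt).

Lemma ltirr x : ~ lt x x. Proof. by case: hw. Qed.
Lemma lttr x y z : lt x y -> lt y z -> lt x z. Proof. by case: hw => _ h _ _; apply: h. Qed.
Lemma lttot x y : [\/ lt x y, x = y | lt y x]. Proof. by case: hw. Qed.
Lemma ltwf : well_founded lt. Proof. by case: hw. Qed.
Lemma ltasym x y : lt x y -> ~ lt y x.
Proof. by move=> h1 h2; apply: (ltirr (lttr h1 h2)). Qed.
Lemma nlt x y : ~ lt x y -> lt y x \/ y = x.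
Proof. by case: (lttot x y) => [//|->|]; [right|left]. Qed.

Lemma least (S : set W) : (exists x, S x) -> exists m, S m /\ forall s, S s -> ~ lt s m.
Proof.
move=> [x Sx]; apply: contrapT => nm.
suff : forall y, ~ S y by move/(_ x).
move=> y; elim/(well_founded_induction ltwf): y => y IH Sy.
apply: nm; exists y; split => // s Ss lsy.
exact: IH lsy Ss.
Qed.

Definition mx (p : W * W) := if pselect (lt p.1 p.2) then p.2 else p.1.

Lemma mx_cases p : (mx p = p.2 /\ lt p.1 p.2) \/ (mx p = p.1 /\ ~ lt p.1 p.2).
Proof. by rewrite /mx; case: pselect => h; [left|right]. Qed.

Definition le x y := lt x y \/ x = y.

Lemma mx_ge1 p : le p.1 (mx p).
Proof. by case: (mx_cases p) => -[-> h]; [left|right]. Qed.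
Lemma mx_ge2 p : le p.2 (mx p).
Proof. case: (mx_cases p) => -[-> h]; [by right|]. by case: (nlt h) => ?; [left|right]. Qed.

Lemma le_lt_tr x y z : le x y -> lt y z -> lt x z.
Proof. by case=> [h|->] //; apply: lttr. Qed.

Definition godel (p q : W * W) :=
  lt (mx p) (mx q) \/ (mx p = mx q /\ (lt p.1 q.1 \/ (p.1 = q.1 /\ lt p.2 q.2))).

Lemma godel_wf : well_founded godel.
Proof.
move=> [a b].
suff : forall m a b, mx (a, b) = m -> Acc godel (a, b) by apply.
move=> m; elim/(well_founded_induction ltwf): m => m IHm.
move=> {}a; elim/(well_founded_induction ltwf): a => a IHa.
move=> {}b; elim/(well_founded_induction ltwf): b => b IHb e.
constructor => -[c d] [h|[e2 [h|[/= e3 h]]]].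
- by apply: (IHm (mx (c, d))) => //; rewrite -e.
- by apply: (IHa c h d); rewrite e2.
- by rewrite /= in e3; subst c; apply: (IHb d h); rewrite e2.
Qed.

Lemma godel_tot p q : [\/ godel p q, p = q | godel q p].
Proof.
case: p q => [a b] [c d]; rewrite /godel /=.
case: (lttot (mx (a, b)) (mx (c, d))) => [h|e|h].
- by apply: Or31; left.
- case: (lttot a c) => [h|e1|h].
  + by apply: Or31; right; split => //; left.
  + subst c; case: (lttot b d) => [h|e1|h].
    * by apply: Or31; right; split => //; right.
    * by subst d; apply: Or32.
    * by apply: Or33; right; split => //; right.
  + by apply: Or33; right; split => //; left.
- by apply: Or33; left.
Qed.

Lemma godel_seg p q : godel q p -> le q.1 (mx p) /\ le q.2 (mx p).
Proof.
have H : le (mx q) (mx p) -> le q.1 (mx p) /\ le q.2 (mx p).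
  move=> h; split.
  - case: (mx_ge1 q) => [h1|->] //; left; case: h => [h|<-] //; exact: lttr h1 h.
  - case: (mx_ge2 q) => [h1|->] //; left; case: h => [h|<-] //; exact: lttr h1 h.
by case=> [h|[e _]]; apply: H; [left|right].
Qed.

Lemma mx_lt p a : lt p.1 a -> lt p.2 a -> lt (mx p) a.
Proof. by move=> h1 h2; case: (mx_cases p) => -[-> _]. Qed.

Notation B := (below lt).

Lemma seg_square a : [set: nat] #<= B a -> B a `*` B a #<= B a.
Proof.
elim/(well_founded_induction ltwf): a => a IH Hinf.
have [a' [ea' mina']] := least (S := fun x => B x #= B a) (ex_intro _ a (card_eqxx _)).
have a'a : le a' a.
  by case: (nlt (mina' a (card_eqxx _))) => h; [left|right].
have Hinf' : [set: nat] #<= B a' by rewrite (card_le_eqr ea').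
have small : forall b, lt b a' -> ~ (B a' #<= B b).
  move=> b ba' h.
  have sub : B b `<=` B a' by move=> x /= xb; apply: lttr xb ba'.
  have e : B b #= B a'.
    by apply: Cantor_Bernstein => //; apply: subset_card_le.
  by apply: (mina' b) => //; apply: card_eq_trans e ea'.
have nomax : forall m, lt m a' -> exists m', lt m m' /\ lt m' a'.
  move=> m ma'; apply: contrapT => nm.
  have sub : B a' `<=` B m `|` [set m].
    move=> x /= xa'; case: (lttot x m) => [h|->|h]; [by left|by right|].
    by case: nm; exists x.
  have infm : [set: nat] #<= B m.
    apply/infiniteP => finm; move/infiniteP: Hinf'; apply.
    apply: (sub_finite_set sub); rewrite finite_setU; split => //.
  apply: (small m ma').
  apply: card_le_trans (subset_card_le sub) _.
  exact: inf_plus1.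
have key : B a' `*` B a' #<= B a'.
  apply: (wf_compare godel_wf).
    by move=> p q _ _; apply: godel_tot.
  move=> [x y] [/= xa ya] hle.
  have [m' [mm' m'a]] := nomax (mx (x, y)) (@mx_lt (x, y) a' xa ya).
  have sub : [set q | (B a' `*` B a') q /\ godel q (x, y)] `<=` B m' `*` B m'.
    move=> q [_ /godel_seg [h1 h2]]; split; [exact: le_lt_tr h1 mm' | exact: le_lt_tr h2 mm'].
  have hle' := card_le_trans hle (subset_card_le sub).
  case: (pselect ([set: nat] #<= B m')) => infm.
    have m'a0 : lt m' a by case: a'a => [h|<-] //; exact: lttr m'a h.
    apply: (small m' m'a); exact: card_le_trans hle' (IH m' m'a0 infm).
  move/infiniteP: Hinf'; apply; apply: card_le_finite hle' _.
  have finm : finite_set (B m') by apply: contrapT => /infiniteP.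
  exact: finite_setX.
have [h1 h2] := (card_eqPle (B a') (B a)).1 ea'.
apply: card_le_trans (setX_le h2 h2) _.
exact: card_le_trans key h1.
Qed.

End WO.

Definition lto T (lt : T -> T -> Prop) (x y : option T) :=
  match x, y with Some a, Some b => lt a b | Some _, None => True | _, _ => False end.

Lemma lto_wo T (lt : T -> T -> Prop) : well_order lt -> well_order (lto lt).
Proof.
move=> hw; split.
- move=> [a|] /=. exact: ltirr hw a. by [].
- move=> [a|] [b|] [c|] /= //. exact: lttr hw a b c.
- move=> [a|] [b|] /=.
  + by case: (lttot hw a b) => [h|->|h]; [apply: Or31|apply: Or32|apply: Or33].
  + exact: Or31.
  + exact: Or33.
  + exact: Or32.
- have hS : forall a, Acc (lto lt) (Some a).
    move=> a; elim/(well_founded_induction (ltwf hw)): a => a IH.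
    apply: Acc_intro => -[b|] h; [exact: IH | case: h].
  move=> [a|]; first exact: hS.
  apply: Acc_intro => -[b|] h; [exact: hS| case: h].
Qed.

Lemma type_square T (lt : T -> T -> Prop) : well_order lt ->
  [set: nat] #<= [set: T] -> [set: T] `*` [set: T] #<= [set: T].
Proof.
move=> hw hN.
have [t0 _] := le_injs_or hN (I : [set: nat] 0%N).
have h1 : [set: T] #<= below (lto lt) None.
  apply: inj_le; exists Some; split; first by move=> x _; exact: I.
  by move=> x y _ _ [].
have h2 : below (lto lt) None #<= [set: T].
  apply: inj_le; exists (fun o => if o is Some a then a else t0 0%N); split => //.
  move=> [a|] [b|] /= ha hb; [by move=> ->| case: hb | case: ha | case: ha].
have := seg_square (lto_wo hw) (card_le_trans hN h1).
move=> sq; apply: card_le_trans (setX_le h1 h1) _.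
exact: card_le_trans sq h2.
Qed.


Lemma add1_le T V (A : set T) (m : T) (Z : set V) :
  A #<= Z -> [set: nat] #<= Z -> Z `*` Z #<= Z -> A `|` [set m] #<= Z.
Proof.
move=> AZ NZ ZZ.
have [z0 Zz0] : exists z, Z z.
  by have [f [fZ _]] := le_injs_or NZ (I : [set: nat] 0%N); exists (f 0%N); apply: fZ.
have [z1 [Zz1 z10]] : exists z, Z z /\ z <> z0.
  have [f [fZ finj]] := le_injs_or NZ (I : [set: nat] 0%N).
  case: (pselect (f 0%N = z0)) => e.
    by exists (f 1%N); split; [apply: fZ | rewrite -e => /(finj _ _ I I)].
  by exists (f 0%N); split => //; apply: fZ.
have h : A `|` [set m] #<= [set: bool] `*` Z.
  apply: (union_le (S := fun b : bool => if b then A else [set m])).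
    by move=> x [Ax|->]; [exists true | exists false].
  by case=> _ //; apply: inj_le; exists (fun _ => z0); split => // x y -> ->.
apply: card_le_trans h _.
apply: card_le_trans (setX_le _ (card_lexx Z)) ZZ.
apply: inj_le; exists (fun b : bool => if b then z1 else z0); split.
  by case.
by case=> [] [] // _ _ e; case: z10.
Qed.

Section Main.
Variables (K : Type) (ltK : K -> K -> Prop) (Kp : Type) (ltKp : Kp -> Kp -> Prop)
  (Kpp : Type) (ltKpp : Kpp -> Kpp -> Prop)
  (hK : regular_uncountable_cardinal ltK)
  (hKp : successor_cardinal K ltKp)
  (hKpp : successor_cardinal Kp ltKpp).

Lemma woK : well_order ltK. Proof. by case: hK. Qed.
Lemma woKp : well_order ltKp. Proof. by case: hKp. Qed.
Lemma woKpp : well_order ltKpp. Proof. by case: hKpp. Qed.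

Lemma K_inf : [set: nat] #<= [set: K].
Proof.
case: hK => _ _ nc _; apply/infiniteP => fin; apply: nc.
exact: finite_set_countable.
Qed.

Lemma K_Kp : [set: K] #<= [set: Kp]. Proof. by case: hKp => _ _ []. Qed.
Lemma nKp_K : ~ ([set: Kp] #<= [set: K]). Proof. by case: hKp => _ _ []. Qed.
Lemma Kp_Kpp : [set: Kp] #<= [set: Kpp]. Proof. by case: hKpp => _ _ []. Qed.
Lemma nKpp_Kp : ~ ([set: Kpp] #<= [set: Kp]). Proof. by case: hKpp => _ _ []. Qed.

Lemma Kp_inf : [set: nat] #<= [set: Kp].
Proof. exact: card_le_trans K_inf K_Kp. Qed.

Lemma KK : [set: K] `*` [set: K] #<= [set: K].
Proof. exact: type_square woK K_inf. Qed.
Lemma KpKp : [set: Kp] `*` [set: Kp] #<= [set: Kp].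
Proof. exact: type_square woKp Kp_inf. Qed.

Lemma K_nomax x : exists y, ltK x y.
Proof.
apply: contrapT => nm.
have sub : [set: K] `<=` below ltK x `|` [set x].
  move=> y _; case: (lttot woK y x) => [h|->|h]; [by left|by right|].
  by case: nm; exists y.
case: hK => _ hb _ _; have [_ hn] := hb x.
have infx : [set: nat] #<= below ltK x.
  apply/infiniteP => finx; move/infiniteP: K_inf; apply.
  apply: (sub_finite_set sub); rewrite finite_setU; split => //.
apply: hn; apply: card_le_trans (subset_card_le sub) _.
exact: inf_plus1.
Qed.

Lemma Kp_reg (T : set Kp) : T #<= [set: K] -> exists u, forall t, T t -> ltKp t u.
Proof.
move=> TK; apply: contrapT => nb.
have cov : forall x, [set: Kp] x -> exists2 t, T t & (fun t => below ltKp t `|` [set t]) t x.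
  move=> x _; apply: contrapT => nx; apply: nb; exists x => t Tt.
  case: (lttot woKp t x) => [//|e|h]; case: nx; exists t => //.
    by right.
  by left.
have := union_le (Z := [set: K]) cov.
move=> /(_ _) H; apply: nKp_K.
have : [set: Kp] #<= T `*` [set: K].
  apply: H => t Tt; apply: add1_le K_inf KK.
  by case: hKp => _ hb _; apply: hb.
move=> h; apply: card_le_trans h _.
exact: card_le_trans (setX_le TK (card_lexx _)) KK.
Qed.

Lemma K_pt : exists k : K, True.
Proof. by have [f _] := le_injs_or K_inf (I : [set: nat] 0%N); exists (f 0%N). Qed.

Lemma Kp_nomax x : exists y, ltKp x y.
Proof.
have [k _] := K_pt.
have [u hu] := @Kp_reg [set x] (inj_le (ex_intro _ (fun _ => k) (conj (fun _ _ => I) (fun a b ha hb _ => etrans ha (esym hb))))).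
by exists u; apply: hu.
Qed.

End Main.


Section Club.
Variables (K : Type) (ltK : K -> K -> Prop) (Kp : Type) (ltKp : Kp -> Kp -> Prop)
  (hK : regular_uncountable_cardinal ltK)
  (hKp : successor_cardinal K ltKp).

Variables (woK : well_order ltK) (woKp : well_order ltKp).

Lemma tK x y z : ltK x y -> ltK y z -> ltK x z.
Proof. by move=> h1 h2; have := lttr woK h1 h2. Qed.
Lemma tKp x y z : ltKp x y -> ltKp y z -> ltKp x z.
Proof. by move=> h1 h2; have := lttr woKp h1 h2. Qed.

Lemma K_count_bound (g : nat -> K) : exists u, forall n, ltK (g n) u.
Proof.
apply: contrapT => nb.
have unb : unbounded ltK (range g).
  move=> y; have [y' yy'] := K_nomax hK y.
  apply: contrapT => nq; apply: nb; exists y' => n.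
  have rg : range g (g n) by exists n.
  case: (lttot woK (g n) y') => [//|e|h]; case: nq; exists (g n) => //.
  - by rewrite e.
  - by have := tK yy' h.
have := hK; case => _ _ nc hr; apply: nc.
exact: card_le_trans (hr _ unb) (card_image_le _ _).
Qed.

Definition limK (x : K) := (exists y, ltK y x) /\ forall y, ltK y x -> exists z, ltK y z /\ ltK z x.

Definition good (d : Kp) (e : K -> Kp) :=
  [/\ (forall x y, ltK x y -> ltKp (e x) (e y)), (forall x, ltKp (e x) d),
      (forall b, ltKp b d -> exists x, ltKp b (e x)) &
      (forall x, limK x -> forall b, ltKp b (e x) -> exists y, ltK y x /\ ltKp b (e y))].

Definition cofin (C : set Kp) (d : Kp) :=
  forall b, ltKp b d -> exists c, [/\ C c, ltKp b c & ltKp c d].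

Lemma good_refl d e x y : good d e -> ltKp (e x) (e y) -> ltK x y.
Proof.
move=> [inc _ _ _] h; case: (lttot woK x y) => [//|e'|h'].
  by subst y; case: (ltirr woKp h).
by case: (ltasym woKp h (inc _ _ h')).
Qed.

Lemma good_inj d e x y : good d e -> e x = e y -> x = y.
Proof.
move=> [inc _ _ _] h; case: (lttot woK x y) => [h'|//|h'].
  by have := inc _ _ h'; rewrite h => /(ltirr woKp).
by have := inc _ _ h'; rewrite h => /(ltirr woKp).
Qed.

Lemma pullback_club d e C : good d e -> club ltKp C -> cofin C d ->
  club ltK [set x | C (e x)].
Proof.
move=> g [Ccl Cub] cf; have [inc bd cof cont] := g.
split.
  move=> a [b0 b0a] ha; apply: Ccl; first by exists (e b0); apply: inc.
  have la : limK a.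
    split; first by exists b0.
    by move=> y ya; have [c [_ yc ca]] := ha y ya; exists c.
  move=> b ba; have [y [ya bly]] := cont a la b ba.
  have [c [Cc yc ca]] := ha y ya.
  by exists (e c); split => //; [apply: tKp bly (inc _ _ yc) | apply: inc].
move=> x.
pose pickC b := epsilon (inhabits d) (fun c => [/\ C c, ltKp b c & ltKp c d]).
pose pickX b := epsilon (inhabits x) (fun y => ltKp b (e y)).
have pickCP : forall b, ltKp b d -> [/\ C (pickC b), ltKp b (pickC b) & ltKp (pickC b) d].
  move=> b bd'; exact: (epsilon_spec (inhabits d) (fun c => [/\ C c, ltKp b c & ltKp c d]) (cf b bd')).
have pickXP : forall b, ltKp b d -> ltKp b (e (pickX b)).
  move=> b bd'; exact: (epsilon_spec (inhabits x) (fun y => ltKp b (e y)) (cof b bd')).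
pose xs := fix xs n := if n is n'.+1 then pickX (pickC (e (xs n'))) else x.
pose cs n := pickC (e (xs n)).
have csP : forall n, [/\ C (cs n), ltKp (e (xs n)) (cs n) & ltKp (cs n) (e (xs n.+1))].
  move=> n; have [h1 h2 h3] := pickCP _ (bd (xs n)).
  by split => //; apply: pickXP.
have xsinc : forall n, ltK (xs n) (xs n.+1).
  move=> n; have [_ h1 h2] := csP n; apply: (good_refl g); exact: tKp h1 h2.
have [u hu] := K_count_bound (fun n => xs n).
have [z [hz zmin]] := least woK (S := fun z => forall n, ltK (xs n) z) (ex_intro _ u hu).
have below_z : forall y, ltK y z -> exists n, ltK y (xs n.+1).
  move=> y yz; apply: contrapT => nn; apply: (zmin y) => // n.
  case: (nlt woK (fun h => nn (ex_intro _ n h))) => h.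
    exact: tK (xsinc n) h.
  by rewrite -h; apply: xsinc.
have lz : limK z.
  split; first by exists (xs 0%N).
  move=> y yz; have [n hn] := below_z y yz; exists (xs n.+1); split => //.
exists z; last exact: hz 0%N.
apply: Ccl; first by exists (e (xs 0%N)); apply: inc.
move=> b bz; have [y [yz bly]] := cont z lz b bz.
have [n hn] := below_z y yz.
have [Cc h1 h2] := csP n.
exists (cs n.+1); split.
- by have [] := csP n.+1.
- apply: tKp bly _; apply: tKp (inc _ _ hn) _.
  by have [] := csP n.+1.
- have [_ _ h3] := csP n.+1; apply: tKp h3 _; exact: inc.
Qed.
Lemma exists_good D : club ltKp D -> exists d e, good d e /\ cofin D d.
Proof.
move=> [Dcl Dub].
have [f0 _] := le_injs_or (Kp_inf hK hKp) (I : [set: nat] 0%N).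
pose d0 := f0 0%N.
pose body (x : K) (rec : forall y, ltK y x -> Kp) : Kp :=
  epsilon (inhabits d0) (fun c => D c /\ (forall y (h : ltK y x), ltKp (rec y h) c) /\
     forall c', D c' -> (forall y (h : ltK y x), ltKp (rec y h) c') -> ~ ltKp c' c).
pose e := Fix (ltwf woK) (fun _ => Kp) body.
have fE : forall x, e x = body x (fun y _ => e y).
  apply: Fix_eq => x g1 g2 eq; rewrite /body; congr epsilon.
  apply: funext => u; apply: propext.
  have E1 : (forall y (h : ltK y x), ltKp (g1 y h) u) <-> (forall y (h : ltK y x), ltKp (g2 y h) u).
    by split => H y h; [rewrite -eq | rewrite eq].
  have E2 : (forall c', D c' -> (forall y (h : ltK y x), ltKp (g1 y h) c') -> ~ ltKp c' u) <->
            (forall c', D c' -> (forall y (h : ltK y x), ltKp (g2 y h) c') -> ~ ltKp c' u).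
    split => H c' Dc' H'; apply: H => // y h; [rewrite eq | rewrite -eq]; exact: H'.
  by rewrite (propext E1) (propext E2).
have eP : forall x, [/\ D (e x), (forall y, ltK y x -> ltKp (e y) (e x)) &
    forall c', D c' -> (forall y, ltK y x -> ltKp (e y) c') -> ~ ltKp c' (e x)].
  move=> x.
  have ex : exists c, D c /\ (forall y (h : ltK y x), ltKp (e y) c) /\
     forall c', D c' -> (forall y (h : ltK y x), ltKp (e y) c') -> ~ ltKp c' c.
    have [u hu] := Kp_reg hK hKp (card_le_trans (card_image_le e (below ltK x)) (card_leT _)).
    have [c Dc uc] := Dub u.
    have [m [[Dm Hm] mmin]] := least woKp
      (S := fun c => D c /\ forall y, ltK y x -> ltKp (e y) c) (ex_intro _ c (conj Dc
        (fun y (h : ltK y x) => tKp (hu (e y) (ex_intro2 _ _ y h erefl)) uc))).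
    exists m; split => //; split => // c' Dc' H'.
    by apply: mmin; split.
  have := epsilon_spec (inhabits d0) _ ex.
  rewrite -/(body x (fun y _ => e y)) -fE => -[De [H1 H2]].
  by split => // c' Dc' H; apply: H2.
have inc : forall x y, ltK x y -> ltKp (e x) (e y).
  by move=> x y xy; have [_ H _] := eP y; apply: H.
have [u hu] := Kp_reg hK hKp (card_le_trans (card_image_le e [set: K]) (card_leT _)).
have [d [dP dmin]] := least woKp (S := fun d => forall x, ltKp (e x) d)
   (ex_intro _ u (fun x => hu (e x) (ex_intro2 _ _ x I erefl))).
have cof : forall b, ltKp b d -> exists x, ltKp b (e x).
  move=> b bd; apply: contrapT => nb; apply: (dmin b) => // x.
  have [x' xx'] := K_nomax hK x.
  have h : ~ ltKp b (e x') by move=> h; apply: nb; exists x'.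
  case: (nlt woKp h) => [h'|<-]; [exact: tKp (inc _ _ xx') h' | exact: inc].
exists d, e; split; last first.
  move=> b bd; have [x bx] := cof b bd.
  by exists (e x); split => //; have [] := eP x.
split => //.
move=> xi [[y0 y0xi] lxi] b bxi; apply: contrapT => nb.
have nb' : forall y, ltK y xi -> le ltKp (e y) b.
  move=> y yxi; have h : ~ ltKp b (e y) by move=> h; apply: nb; exists y.
  by case: (nlt woKp h) => [h'|->]; [left|right].
have [s [sP smin]] := least woKp (S := fun s => forall y, ltK y xi -> le ltKp (e y) s)
  (ex_intro _ b nb').
have strict : forall y, ltK y xi -> ltKp (e y) s.
  move=> y yxi; have [z [yz zxi]] := lxi y yxi.
  by case: (sP z zxi) => [h|<-]; [exact: tKp (inc _ _ yz) h | exact: inc].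
have sb : le ltKp s b by case: (nlt woKp (smin b nb')) => [h|->]; [left|right].
have Ds : D s.
  apply: Dcl; first by exists (e y0); apply: strict.
  move=> b' b's.
  have [y [yxi b'y]] : exists y, ltK y xi /\ ltKp b' (e y).
    apply: contrapT => nn; apply: (smin b') => // y yxi.
    have h : ~ ltKp b' (e y) by move=> h; apply: nn; exists y.
    by case: (nlt woKp h) => [h'|->]; [left|right].
  have [z [yz zxi]] := lxi y yxi.
  exists (e z); split; [by have [] := eP z | exact: tKp b'y (inc _ _ yz) | exact: strict].
have [_ _ H] := eP xi.
apply: (H s Ds strict).
by case: sb => [h|->] //; exact: tKp h bxi.
Qed.

End Club.


Lemma small_seg (P U : Type) (R : P -> P -> Prop) (Y : set U) :
  well_order R -> ~ ([set: P] #<= Y) -> exists p, Y #<= below R p.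
Proof.
move=> hw H; apply: contrapT => nex; apply: H.
apply: (wf_compare (ltwf hw)) => [p q _ _|p _ h]; first exact: (lttot hw p q).
apply: nex; exists p; apply: card_le_trans h (subset_card_le _).
by move=> q [].
Qed.

Lemma sub_eq T U (A : set T) (Y : set U) : A #<= Y -> exists Z, Z `<=` Y /\ Z #= A.
Proof.
move=> AY; case: (pselect (exists a, A a)) => [[a Aa]|nA].
  have [f [fY finj]] := le_injs_or AY Aa.
  exists (f @` A); split; first by move=> _ [x Ax <-]; apply: fY.
  apply: inj_card_eq => x y /set_mem Ax /set_mem Ay; exact: finj.
exists set0; split => //; apply: Cantor_Bernstein => //.
exact: set0_le.
Qed.

Lemma eq_le1 T U (A : set T) (B : set U) : A #= B -> A #<= B.
Proof. by move=> /(card_eqPle A B) []. Qed.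
Lemma eq_le2 T U (A : set T) (B : set U) : A #= B -> B #<= A.
Proof. by move=> /(card_eqPle A B) []. Qed.

Section Final.
Variables (K : Type) (ltK : K -> K -> Prop) (Kp : Type) (ltKp : Kp -> Kp -> Prop)
  (Kpp : Type) (ltKpp : Kpp -> Kpp -> Prop)
  (hK : regular_uncountable_cardinal ltK)
  (hKp : successor_cardinal K ltKp)
  (hKpp : successor_cardinal Kp ltKpp)
  (F : set (set K)) (hF : is_filter F) (hFD : club_filter ltK `<=` F).

Let woK : well_order ltK := woK hK.
Let woKp : well_order ltKp := woKp hKp.
Let woKpp : well_order ltKpp := woKpp hKpp.

Lemma Gal_mono : Gal Kp Kp F -> Gal Kp Kpp F.
Proof.
move=> G CC CF CKpp.
have [Z [ZC ZKp]] := sub_eq (card_le_trans (Kp_Kpp hKpp) (eq_le2 CKpp)).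
have [E [EZ EKp FE]] := G Z (subset_trans ZC CF) ZKp.
by exists E; split => //; apply: subset_trans ZC.
Qed.

Lemma pigeon T (X : set T) (f : T -> Kp) : X #= [set: Kpp] ->
  exists d, [set: Kpp] #<= [set x | X x /\ f x = d].
Proof.
move=> XKpp; apply: contrapT => nd.
have h : forall d, [set: Kp] d -> [set x | X x /\ f x = d] #<= [set: Kp].
  move=> d _; have [p hp] := small_seg woKpp (fun h => nd (ex_intro _ d h)).
  apply: card_le_trans hp _; by case: hKpp => _ hb _; apply: hb.
have := union_le (I := [set: Kp]) (S := fun d => [set x | X x /\ f x = d])
   (X := X) (fun x Xx => ex_intro2 _ _ (f x) I (conj Xx erefl)) h.
move=> XKp; apply: (nKpp_Kp hKpp).
apply: card_le_trans (eq_le2 XKpp) _.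
exact: card_le_trans XKp (KpKp hK hKp).
Qed.

Lemma tail_F x : F [set y | ltK x y].
Proof.
apply: hFD; exists [set y | ltK x y] => //; split.
  move=> a [b0 b0a] ha; have [c [xc _ ca]] := ha b0 b0a.
  by have := lttr woK xc ca.
move=> y.
have [m [xm ym]] : exists m, le ltK x m /\ le ltK y m.
  case: (lttot woK x y) => [h|->|h].
  - by exists y; split; [left|right].
  - by exists y; split; right.
  - by exists x; split; [right|left].
have [z mz] := K_nomax hK m.
exists z; [exact: (le_lt_tr woK xm mz) | exact: (le_lt_tr woK ym mz)].
Qed.

Lemma F_large G : F G -> [set: K] #<= G.
Proof.
move=> FG; case: hK => _ _ _ hr; apply: hr => x.
have [hT h0 hup hI] := hF.
apply: contrapT => nn; apply: h0.
have E0 : G `&` [set y | ltK x y] = set0.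
  by apply/seteqP; split => // y [Gy xy]; apply: nn; exists y.
by rewrite -E0; apply: hI => //; apply: tail_F.
Qed.

Lemma main_contra : @Gal K Kp Kpp F -> ~ @neg_st_Gal K Kp Kp Kpp ltKp.
Proof.
move=> G [CC [CD CKpp Hsmall]].
have [f0 _] := le_injs_or (Kp_inf hK hKp) (I : [set: nat] 0%N).
pose d0 := f0 0%N.
pose Dc (X : set Kp) := epsilon (inhabits (@setT Kp)) (fun D => club ltKp D /\ D `<=` X).
have DcP : forall X, CC X -> club ltKp (Dc X) /\ Dc X `<=` X.
  move=> X CX; apply: (epsilon_spec (inhabits (@setT Kp)) (fun D => club ltKp D /\ D `<=` X)).
  by have [D cD DX] := CD X CX; exists D.
pose dX X := epsilon (inhabits d0)
  (fun d => exists e, good ltK ltKp d e /\ cofin ltKp (Dc X) d).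
pose eS d := epsilon (inhabits (fun _ : K => d0)) (fun e => good ltK ltKp d e).
have dXP : forall X, CC X -> good ltK ltKp (dX X) (eS (dX X)) /\ cofin ltKp (Dc X) (dX X).
  move=> X CX; have [cl _] := DcP X CX.
  have ex := exists_good hK hKp woK woKp cl.
  have [e [ge cf]] := epsilon_spec (inhabits d0)
    (fun d => exists e, good ltK ltKp d e /\ cofin ltKp (Dc X) d) ex.
  split => //; apply: (epsilon_spec (inhabits (fun _ : K => d0)) (fun e => good ltK ltKp (dX X) e)).
  by exists e.
have [d Hd] := pigeon dX CKpp.
pose S := [set X | CC X /\ dX X = d].
have SC : S `<=` CC by move=> X [].
have SKpp : S #= [set: Kpp].
  apply: Cantor_Bernstein => //.
  exact: card_le_trans (subset_card_le SC) (eq_le1 CKpp).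
pose e := eS d.
have ge : forall X, S X -> good ltK ltKp d e.
  by move=> X [CX dXd]; rewrite /e -dXd; have [] := dXP X CX.
pose g (X : set Kp) := [set xi | X (e xi)].
have gF : forall X, S X -> F (g X).
  move=> X [CX dXd]; have [gd cf] := dXP X CX; rewrite dXd in gd cf.
  apply: hFD; exists [set xi | Dc X (e xi)].
    exact: (pullback_club hK woK woKp gd (DcP X CX).1 cf).
  by move=> xi; apply: (DcP X CX).2.
have key : exists E, [/\ E `<=` S, E #= [set: Kp] &
    exists2 G0, F G0 & forall xi, G0 xi -> forall X, E X -> X (e xi)].
  pose A := g @` S.
  case: (pselect ([set: Kpp] #<= A)) => hA.
    have AKpp : A #= [set: Kpp].
      apply: Cantor_Bernstein => //.
      exact: card_le_trans (card_image_le g S) (eq_le1 SKpp).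
    have AF : A `<=` F by move=> _ [X SX <-]; apply: gF.
    have [E' [E'A E'Kp FE']] := G A AF AKpp.
    pose sec A0 := epsilon (inhabits (@setT Kp)) (fun X => S X /\ g X = A0).
    have secP : forall A0, A A0 -> S (sec A0) /\ g (sec A0) = A0.
      move=> A0 [X SX gX]; apply: (epsilon_spec (inhabits (@setT Kp)) (fun X => S X /\ g X = A0)).
      by exists X.
    exists (sec @` E'); split.
    - by move=> _ [A0 /E'A /secP [SX _] <-].
    - apply: card_eq_trans E'Kp.
      apply: inj_card_eq => A1 A2 /set_mem /E'A H1 /set_mem /E'A H2 eq12.
      by rewrite -(secP _ H1).2 -(secP _ H2).2 eq12.
    - exists (\bigcap_(A0 in E') A0) => // xi Gxi _ [A0 E'A0 <-].
      have := Gxi A0 E'A0; rewrite -{1}(secP _ (E'A _ E'A0)).2.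
      by [].
  have [p hp] := small_seg woKpp hA.
  have AKp : A #<= [set: Kp].
    by apply: card_le_trans hp _; case: hKpp => _ hb _; apply: hb.
  pose T A0 := [set X | S X /\ g X = A0].
  have [A0 [AA0 hT]] : exists A0, A A0 /\ [set: Kp] #<= T A0.
    apply: contrapT => nA.
    have hTK : forall A0, A A0 -> T A0 #<= [set: K].
      move=> A0 AA0; have [q hq] := small_seg woKp (fun h => nA (ex_intro _ A0 (conj AA0 h))).
      by apply: card_le_trans hq _; case: hKp => _ hb _; apply: hb.
    have := union_le (I := A) (S := T) (X := S)
      (fun X SX => ex_intro2 _ _ (g X) (ex_intro2 _ _ X SX erefl) (conj SX erefl)) hTK.
    move=> SAK; apply: (nKpp_Kp hKpp).
    apply: card_le_trans (eq_le2 SKpp) _.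
    apply: card_le_trans SAK _.
    exact: card_le_trans (setX_le AKp (K_Kp hKp)) (KpKp hK hKp).
  have [E [ET EKp]] := sub_eq hT.
  exists E; split.
  - by move=> X /ET [].
  - exact: EKp.
  - case: AA0 => X1 SX1 gX1.
    exists A0; first by rewrite -gX1; apply: gF.
    by move=> xi A0xi X /ET [_ gX]; rewrite -gX in A0xi.
have [E [ES EKp [G0 FG0 HG0]]] := key.
have [_ nle] := Hsmall E (subset_trans ES SC) EKp.
apply: nle; apply: card_le_trans (F_large FG0) _.
have [X0 EX0] : exists X, E X.
  have [f1 [f1E _]] := le_injs_or (eq_le2 EKp) (I : [set: Kp] d0).
  by exists (f1 d0); apply: f1E.
have gd := ge X0 (ES X0 EX0).
apply: inj_le; exists e; split.
  by move=> xi Gxi X EX; apply: HG0.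
by move=> x y _ _ exy; apply: (good_inj woK woKp gd exy).
Qed.

End Final.

Local Close Scope card_scope.

(* K models kappa, Kp models kappa^+, Kpp models kappa^{++}. *)
Theorem proposition6p4
    (K : Type) (ltK : K -> K -> Prop)
    (Kp : Type) (ltKp : Kp -> Kp -> Prop)
    (Kpp : Type) (ltKpp : Kpp -> Kpp -> Prop)
    (hK : regular_uncountable_cardinal ltK)
    (hKp : successor_cardinal K ltKp)
    (hKpp : successor_cardinal Kp ltKpp)
    (F : set (set K))
    (hF : is_filter F)
    (hFc : complete_filter K F)
    (hFD : club_filter ltK `<=` F) :
  (@Gal K Kp Kpp F -> ~ @neg_st_Gal K Kp Kp Kpp ltKp) /\
  (@Gal K Kp Kp F -> ~ @neg_st_Gal K Kp Kp Kpp ltKp).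
Proof.
split; first exact: (main_contra hK hKp hKpp hF hFD).
move=> G; apply: (main_contra hK hKp hKpp hF hFD).
exact: (Gal_mono hKpp G).
Qed.
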